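(* Let $k\ge3$ and $d$ a positive integer, and let $z^*$ be the minimal spike of degree $(k-2)(2^d-1)$. If $d>\delta(k-2)$, then $\omega_i(z^* )=k-2$ for $1\le i\le d-\delta(k-2)$ and $\omega_i(z^* )<k-2$ for $i>d-\delta(k-2)$.
   Context: For a positive integer $a$, $\alpha(a)$ is the number of ones in its binary expansion, $\zeta(a)$ is the largest $u$ with $2^u\mid a$, and $\delta(a)=a-\alpha(a)-\zeta(a)$. For a monomial $x=x_1^{a_1}\cdots x_k^{a_k}$, $\omega_i(x)=\sum_j\alpha_{i-1}(a_j)$ where $\alpha_r(a)$ is the $r$-th binary digit of $a$. For a positive integer $n$, $\mu(n)$ is the least $r$ with $n=\sum_{i=1}^r(2^{u_i}-1)$, $u_i>0$; if $\mu(n)=s$ then $n=\sum_{i=1}^s(2^{e_i}-1)$ for unique integers $e_1>e_2>\dots>e_{s-1}\ge e_s>0$, and the minimal spike of degree $n$ is $\prod_{i=1}^sx_i^{2^{e_i}-1}$. *)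

(* Defs.v *)
From mathcomp Require Import all_boot.
Set Implicit Arguments. Unset Strict Implicit. Unset Printing Implicit Defensive.

Definition bit (r a : nat) : nat := odd (a %/ 2 ^ r).

(* alpha(a): number of ones in the binary expansion (a < 2^a, so bits < a suffice) *)
Definition alpha (a : nat) : nat := \sum_(r < a) bit r a.

Definition zeta (a : nat) : nat := logn 2 a.

Definition delta (a : nat) : nat := a - alpha a - zeta a.

(* A monomial x_1^{a_1} ... x_m^{a_m} is represented by its exponent list.
   omega_i(x) = sum_j alpha_{i-1}(a_j). *)
Definition omega (i : nat) (x : seq nat) : nat := \sum_(a <- x) bit i.-1 a.

Definition spike_sum (u : seq nat) : nat := \sum_(v <- u) (2 ^ v - 1).

Definition is_rep (n : nat) (u : seq nat) : Prop :=
  all (fun v => 0 < v) u /\ spike_sum u = n.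

(* e = (e_1, ..., e_s) are the exponents of the minimal spike of degree n:
   s = mu(n) (least length of a representation), n = sum (2^{e_i}-1),
   e_1 > e_2 > ... > e_{s-1} >= e_s > 0. *)
Definition min_spike_exps (n : nat) (e : seq nat) : Prop :=
  [/\ is_rep n e,
      (forall u, is_rep n u -> size e <= size u) &
      (forall i, i.+1 < size e ->
          (nth 0 e i.+1 < nth 0 e i) \/
          (i.+2 = size e /\ nth 0 e i.+1 <= nth 0 e i))].

(* the minimal spike prod_{i=1}^s x_i^{2^{e_i}-1}, as exponent list *)
Definition spike_of (e : seq nat) : seq nat := map (fun v => 2 ^ v - 1) e.

(* Main.v *)
Require Import Defs.
From mathcomp Require Import all_boot zify.

Lemma bit0n n : bit 0 n = odd n.
Proof. by rewrite /bit expn0 divn1. Qed.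

Lemma bitS r n : bit r.+1 n = bit r n./2.
Proof. by rewrite /bit expnS divnMA divn2. Qed.

Lemma bit_big r n : n <= r -> bit r n = 0.
Proof.
move=> h; rewrite /bit divn_small //.
apply: (leq_trans (ltn_expl n (isT : 1 < 2))); by rewrite leq_exp2l.
Qed.

Lemma alpha_wide B n : n <= B -> alpha n = \sum_(0 <= r < B) bit r n.
Proof.
move=> h; rewrite /alpha -(big_mkord xpredT (fun r => bit r n)).
rewrite (@big_cat_nat _ _ _ n 0 B) //=.
rewrite [X in _ = _ + X]big1_seq ?addn0 // => r; rewrite mem_index_iota => /andP[_ /andP[hr _]].
exact: bit_big.
Qed.

Lemma alpha0 : alpha 0 = 0.
Proof. by rewrite /alpha big_ord0. Qed.

Lemma alpha_rec n : alpha n = odd n + alpha n./2.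
Proof.
rewrite (@alpha_wide n.+1 n (leqnSn n)) big_nat_recl // bit0n.
rewrite (@alpha_wide n n./2); last by lia.
by congr (_ + _); apply: eq_bigr => r _; rewrite bitS.
Qed.

Lemma alpha_dbl b : alpha b.*2 = alpha b.
Proof. by rewrite alpha_rec odd_double doubleK. Qed.

Lemma alpha_dblS b : alpha b.*2.+1 = (alpha b).+1.
Proof. rewrite alpha_rec. have -> : (b.*2.+1)./2 = b by lia. by rewrite /= odd_double. Qed.

Lemma zeta_dbl b : 0 < b -> zeta b.*2 = (zeta b).+1.
Proof.
move=> hb; rewrite /zeta lognE /= dvdn2 odd_double /=.
have -> : 0 < b.*2 by lia.
by rewrite divn2 doubleK.
Qed.

Lemma zeta_dblS b : zeta b.*2.+1 = 0.
Proof. by rewrite /zeta lognE dvdn2 /= odd_double. Qed.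

Definition f n := alpha n + zeta n.

Lemma f_dbl b : 0 < b -> f b.*2 = (f b).+1.
Proof. by move=> hb; rewrite /f alpha_dbl zeta_dbl // addnS. Qed.

Lemma f_dblS b : f b.*2.+1 = (alpha b).+1.
Proof. by rewrite /f alpha_dblS zeta_dblS addn0. Qed.

Lemma alpha1 : alpha 1 = 1.
Proof. by rewrite (alpha_dblS 0) alpha0. Qed.

Lemma f1 : f 1 = 1.
Proof. by rewrite /f alpha1 (zeta_dblS 0). Qed.

Lemma f_pow c K : 0 < K -> f (2 ^ c * K) = c + f K.
Proof.
move=> hK; elim: c => [|c IH]; first by rewrite expn0 mul1n.
rewrite expnS -mulnA mul2n f_dbl ?IH //.
by rewrite muln_gt0 expn_gt0.
Qed.

Lemma split2 n : n = (n./2).*2 \/ n = (n./2).*2.+1.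
Proof. lia. Qed.

Lemma L1 a : alpha a.+1 <= (alpha a).+1.
Proof.
elim/ltn_ind: a => a IH.
case: (split2 a) => ha; rewrite ha.
- by rewrite alpha_dblS alpha_dbl.
- have -> : (a./2).*2.+2 = (a./2.+1).*2 by lia.
  rewrite alpha_dbl alpha_dblS; apply: leq_trans (IH _ _) _; [lia | by []].
Qed.

Lemma L2 s a : alpha (a + 2 ^ s) <= (alpha a).+1.
Proof.
elim: s a => [|s IH] a; first by rewrite expn0 addn1 L1.
case: (split2 a) => ->.
- have -> : (a./2).*2 + 2 ^ s.+1 = (a./2 + 2^s).*2 by rewrite expnS; lia.
  by rewrite !alpha_dbl IH.
- have -> : (a./2).*2.+1 + 2 ^ s.+1 = (a./2 + 2^s).*2.+1 by rewrite expnS; lia.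
  by rewrite !alpha_dblS ltnS IH.
Qed.

Lemma L3 a : f a.+1 <= (alpha a).+1.
Proof.
elim/ltn_ind: a => a IH.
case: (split2 a) => ha; rewrite ha.
- by rewrite f_dblS alpha_dbl.
- have -> : (a./2).*2.+2 = (a./2.+1).*2 by lia.
  rewrite f_dbl // alpha_dblS ltnS; apply: leq_trans (IH _ _) _; [lia | by []].
Qed.

Lemma L4 s N : 0 < N -> f (N + 2 ^ s) <= (f N).+1.
Proof.
elim: s N => [|s IH] N hN.
  rewrite expn0 addn1; apply: (leq_trans (L3 N)); rewrite ltnS /f; lia.
case: (split2 N) => hE; rewrite hE.
- have -> : (N./2).*2 + 2 ^ s.+1 = (N./2 + 2^s).*2 by rewrite expnS; lia.
  have hp : 0 < N./2 by lia.
  rewrite !f_dbl ?ltnS ?IH //; by rewrite addn_gt0 hp.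
- have -> : (N./2).*2.+1 + 2 ^ s.+1 = (N./2 + 2^s).*2.+1 by rewrite expnS; lia.
  by rewrite !f_dblS ltnS L2.
Qed.

Definition S (l : seq nat) := \sum_(v <- l) 2 ^ v.

Lemma S_cons x l : S (x :: l) = 2 ^ x + S l.
Proof. by rewrite /S big_cons. Qed.

Lemma Fp l : f (1 + S l) <= (size l).+1.
Proof.
elim: l => [|x l IH]; first by rewrite /S big_nil f1.
have -> : 1 + S (x :: l) = (1 + S l) + 2 ^ x by rewrite S_cons; lia.
apply: leq_trans (L4 _ _ _) _; first by lia.
by rewrite /= ltnS.
Qed.

Lemma S_shift c l : all (fun v => c <= v) l -> S l = 2 ^ c * S (map (subn^~ c) l).
Proof.
elim: l => [|x l IH] /=; first by rewrite /S !big_nil muln0.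
move=> /andP[hx hl]; rewrite !S_cons IH // mulnDr -expnD subnKC //.
Qed.

Lemma alpha_pow c K : alpha (2 ^ c * K) = alpha K.
Proof.
elim: c => [|c IH]; first by rewrite expn0 mul1n.
by rewrite expnS -mulnA mul2n alpha_dbl IH.
Qed.

Lemma G l c : all (fun v => c <= v) l -> c \in l -> f (S l) <= size l + c.
Proof.
move=> hall hc.
have hp := perm_to_rem hc.
have -> : S l = S (c :: rem c l) by rewrite /S (perm_big _ hp).
rewrite (perm_size hp) (@S_shift c); last by rewrite (perm_all _ hp) in hall.
rewrite f_pow /=; last by rewrite S_cons subnn expn0.
rewrite S_cons subnn expn0.
have := Fp (map (subn^~ c) (rem c l)); rewrite size_map; lia.
Qed.

Lemma sorted_shift k t : sorted ltn t -> all (fun v => k <= v) t ->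
  sorted ltn (map (subn^~ k) t).
Proof.
case: t => [|x t] //=.
elim: t x => [|y t IH] x //= /andP[hxy hp] /and3P[hx hy ht].
rewrite IH ?hp ?hy ?ht // andbT; lia.
Qed.

Lemma D n l : size l = n -> sorted ltn l -> alpha (S l) = n.
Proof.
elim: n l => [|n IH] [|y t] //=; first by rewrite /S big_nil alpha0.
move=> [hs]; rewrite (path_sortedE ltn_trans) => /andP[hall hst].
have hall' : all (fun v => y.+1 <= v) t by [].
rewrite S_cons (@S_shift y.+1 t hall').
have -> : 2 ^ y + 2 ^ y.+1 * S (map (subn^~ y.+1) t)
   = 2 ^ y * (S (map (subn^~ y.+1) t)).*2.+1.
  by rewrite expnS; lia.
by rewrite alpha_pow alpha_dblS IH ?size_map // sorted_shift.
Qed.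

Lemma U n l c : size l = n -> sorted ltn l -> c <= head c l ->
  (size l).+1 + c <= f (S (c :: l)).
Proof.
elim/ltn_ind: n l c => n IH [|y t] c hs hsort hc.
  by rewrite S_cons /S big_nil addn0 -(muln1 (2 ^ c)) f_pow // f1 /= addnC.
case: (eqVneq y c) => hyc.
- subst y.
  have hst : sorted ltn t by move: hsort => /= /path_sorted.
  have hh : c.+1 <= head c.+1 t.
    by case: t hsort {hs hst hc IH} => [|z t] //= /andP[].
  have := IH (size t) _ t c.+1 (erefl _) hst hh.
  rewrite !S_cons /= expnS; rewrite -hs /=.
  have -> : 2 ^ c + (2 ^ c + S t) = 2 * 2 ^ c + S t by lia.
  move=> h; apply: leq_trans (h (ltnSn _)); lia.
- have hcy : c < y by rewrite ltn_neqAle eq_sym hyc.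
  have hall : all (fun v => c.+1 <= v) (y :: t).
    have : path ltn c (y :: t) by rewrite /= hcy.
    by rewrite (path_sortedE ltn_trans) => /andP[].
  rewrite S_cons (@S_shift c.+1 _ hall).
  have -> : 2 ^ c + 2 ^ c.+1 * S (map (subn^~ c.+1) (y :: t))
     = 2 ^ c * (S (map (subn^~ c.+1) (y :: t))).*2.+1.
    by rewrite expnS; lia.
  rewrite f_pow // f_dblS (@D (size (y :: t))) ?size_map //.
    by rewrite addnC.
  exact: sorted_shift.
Qed.

Lemma bit_spike r v : bit r (2 ^ v - 1) = (r < v).
Proof.
elim: r v => [|r IH] [|v].
- by [].
- rewrite bit0n expnS; have -> : 2 * 2 ^ v - 1 = (2 ^ v - 1).*2.+1.
    have := expn_gt0 2 v; lia.
  by rewrite /= odd_double.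
- by rewrite /bit expn0 subnn div0n.
- rewrite bitS expnS; have -> : (2 * 2 ^ v - 1)./2 = 2 ^ v - 1.
    have := expn_gt0 2 v; lia.
  by rewrite IH.
Qed.

Lemma omegaE i e : 0 < i -> omega i (spike_of e) = \sum_(v <- e) (i <= v).
Proof.
move=> hi; rewrite /omega /spike_of big_map; apply: eq_bigr => v _.
by rewrite bit_spike; case: i hi.
Qed.

Lemma spike_S e : all (fun v => 0 < v) e -> S e = spike_sum e + size e.
Proof.
elim: e => [|x e IH] /=; first by rewrite /S /spike_sum !big_nil.
move=> /andP[hx he]; rewrite S_cons /spike_sum big_cons -/(spike_sum e) IH //.
have := expn_gt0 2 x; lia.
Qed.

Lemma S_nseq0 t : S (nseq t 0) = t.
Proof. elim: t => [|t IH]; first by rewrite /S big_nil. by rewrite /= S_cons IH expn0 add1n. Qed.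

Lemma S_cat a b : S (a ++ b) = S a + S b.
Proof. by rewrite /S big_cat. Qed.

Lemma spike_nseq m d : spike_sum (nseq m d) = m * (2 ^ d - 1).
Proof.
elim: m => [|m IH]; first by rewrite /spike_sum big_nil.
by rewrite /spike_sum /= big_cons -/(spike_sum _) IH mulSn.
Qed.

Lemma all_head l c : sorted ltn l -> c <= head c l -> all (fun v => c <= v) l.
Proof.
case: l => [|y t] //= hs hc; rewrite hc /=.
move: hs; rewrite (path_sortedE ltn_trans) => /andP[ha _].
apply/allP => v hv; have := allP ha v hv; rewrite /=; lia.
Qed.

Theorem proposition3 (k d : nat) (e : seq nat) :
  3 <= k -> 0 < d ->
  min_spike_exps ((k - 2) * (2 ^ d - 1)) e ->
  delta (k - 2) < d ->
  (forall i, 1 <= i <= d - delta (k - 2) -> omega i (spike_of e) = k - 2) /\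
  (forall i, d - delta (k - 2) < i -> omega i (spike_of e) < k - 2).
Proof.
move=> hk hd [[hpos hsum] hmin hstr] hdel.
set m := k - 2 in hsum hmin hdel *.
have hm : 0 < m by rewrite /m; lia.
clearbody m.
have hpow : 0 < 2 ^ d by rewrite expn_gt0.
have hmd : m * (2 ^ d - 1) + m = m * 2 ^ d.
  by rewrite mulnBr muln1 subnK // leq_pmulr.
have hfm : f m <= m.
  have := @G (nseq m 0) 0.
  rewrite S_nseq0 size_nseq addn0; apply.
    by apply/allP => v; rewrite mem_nseq => /andP[_ /eqP ->].
  by rewrite mem_nseq hm /=.
have hfmd : f (m * 2 ^ d) = d + f m by rewrite mulnC f_pow.
have hsize : size e = m.
  apply/eqP; rewrite eqn_leq; apply/andP; split.
    have := hmin (nseq m d); rewrite size_nseq; apply; split.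
      by apply/allP => v; rewrite mem_nseq => /andP[_ /eqP ->].
    by rewrite spike_nseq.
  rewrite leqNgt; apply/negP => hlt.
  have := @G (e ++ nseq (m - size e) 0) 0.
  rewrite S_cat S_nseq0 spike_S // hsum size_cat size_nseq addn0.
  have -> : m * (2 ^ d - 1) + size e + (m - size e) = m * 2 ^ d.
    rewrite -hmd; lia.
  rewrite hfmd.
  have H1 : all (fun v => 0 <= v) (e ++ nseq (m - size e) 0) by apply/allP.
  have H2 : 0 \in e ++ nseq (m - size e) 0.
    by rewrite mem_cat mem_nseq eqxx andbT subn_gt0 hlt orbT.
  move=> /(_ H1 H2); rewrite /delta in hdel; rewrite /f in hfm *; lia.
have hSe : S e = m * 2 ^ d by rewrite spike_S // hsum hsize hmd.
move: hstr hSe hsize hpos; case: (lastP e) => [|e' c]; first by move=> _ _ /= h; lia.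
move=> hstr hSe hsize hpos.
have hsort : sorted ltn (rev e').
  rewrite rev_sorted; apply/(sortedP 0) => i hi.
  have := hstr i; rewrite size_rcons !nth_rcons.
  have h1 : i < size e' by lia.
  have hh : i.+1 < (size e').+1 by lia.
  rewrite hi h1 => /(_ hh) [//|[h2 _]]; lia.
have hhead : c <= head c (rev e').
  case: (lastP e') hstr hsize => [|e'' y] //= hstr hsize.
  rewrite rev_rcons /=.
  have n1 : nth 0 (rcons (rcons e'' y) c) (size e'').+1 = c.
    by rewrite nth_rcons size_rcons ltnn eqxx.
  have n2 : nth 0 (rcons (rcons e'' y) c) (size e'') = y.
    by rewrite nth_rcons size_rcons ltnSn nth_rcons ltnn eqxx.
  have := hstr (size e''); rewrite n1 n2 !size_rcons => /(_ (ltnSn _)).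
  case; [lia | by case].
have hall : all (fun v => c <= v) (rcons e' c).
  by rewrite all_rcons leqnn /= -all_rev all_head.
have hU := @U _ (rev e') c (erefl _) hsort hhead.
have hSrev : S (c :: rev e') = S (rcons e' c) by rewrite -rev_rcons /S big_rev.
rewrite hSrev hSe hfmd size_rev in hU.
have hG := @G (rcons e' c) c hall.
have hcin : c \in rcons e' c by rewrite mem_rcons mem_head.
move: hG => /(_ hcin) hG.
rewrite hSe hfmd hsize in hG.
rewrite size_rcons in hsize.
have hc : d - delta m = c by rewrite /delta; rewrite /f in hfm hU hG; lia.
rewrite hc; split.
- move=> i /andP[hi1 hic]; rewrite omegaE //.
  transitivity (\sum_(v <- rcons e' c) 1); last by rewrite sum1_size size_rcons.
  apply: eq_big_seq => v hv.
  have := allP hall v hv; rewrite /=; case: leqP => //; lia.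
- move=> i hi; rewrite omegaE; last by lia.
  have hf : (i <= c) = false by apply/negbTE; rewrite -ltnNge.
  rewrite big_rcons /= hf addn0 -hsize ltnS.
  rewrite -sum1_size; apply: leq_sum => v _; by case: (i <= v).
Qed.
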